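(* Let $V$ be a finite set, $\mathcal{F}\subseteq 2^V$ a minimal hereditary family with $\delta(\mathcal{F})\ge 12$, and let $x\in V$ be mini-weight. Then: (1) $|\mathcal{Q}(x)|=2$; (2) writing $\mathcal{Q}(x)=\{Q_1,Q_2\}$, we have $|Q_1\cap Q_2|=3$ and $\mathcal{F}(x)=\{F\setminus\{x\}: x\in F\subseteq Q_i \text{ for some } i\in\{1,2\}\}$; (3) $u(x)=5.3-\frac{2}{15}$.
   Context: Let $V$ be a finite set. A family $\mathcal{F}\subseteq 2^V$ is hereditary if $F'\subseteq F\in\mathcal{F}$ implies $F'\in\mathcal{F}$. For $x\in V$: the link is $\mathcal{F}(x)=\{F\setminus\{x\}: x\in F\in\mathcal{F}\}$, $d_{\mathcal{F}}(x)=|\mathcal{F}(x)|$, $\delta(\mathcal{F})=\min_{x\in V}d_{\mathcal{F}}(x)$. For $A\subseteq V$, $d_{\mathcal{F}}(A)=|\{F\in\mathcal{F}: A\subseteq F\}|$. A set $F\in\mathcal{F}$ is maximal if no other member strictly contains it; a hereditary $\mathcal{F}$ with $\delta(\mathcal{F})\ge 12$ is minimal if $\delta(\mathcal{F}\setminus\{F\})\le 11$ for every maximal $F\in\mathcal{F}$. $f_i(x)$ denotes the number of $i$-element sets in $\mathcal{F}(x)$. A vertex $x$ is mini-weight if $f_1(x)=4$, $f_2(x)=5$, $f_3(x)=2$. $\mathcal{Q}=\{Q\in\mathcal{F}:|Q|=4\}$ and $\mathcal{Q}(x)=\{Q\in\mathcal{Q}: x\in Q\}$. Weights: for $x\in F\in\mathcal{F}$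 define $\omega(x,F)$ as follows. If $|F|\ne 3$, $\omega(x,F)=1/|F|$. If $|F|=3$: if $F$ is contained in some 4-element member of $\mathcal{F}$, every element of $F$ gets $\omega=1/3$; otherwise order the three 2-subsets of $F$ as $e_1,e_2,e_3$ with $d_{\mathcal{F}}(e_1)\le d_{\mathcal{F}}(e_2)\le d_{\mathcal{F}}(e_3)$; if $d_{\mathcal{F}}(e_2)\le 4<d_{\mathcal{F}}(e_3)$, the two elements of $e_3$ get $\omega=7/20$ and the element of $F\setminus e_3$ gets $6/20$; else if $d_{\mathcal{F}}(e_1)\le 4<d_{\mathcal{F}}(e_2)$, the two elements of $e_1$ get $7/20$ and the element of $F\setminus e_1$ gets $6/20$; otherwise every element of $F$ gets $1/3$. The weight of $x$ is $u(x)=\sum_{x\in F\in\mathcal{F}}\omega(x,F)$. *)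

(* Defs.v *)
From mathcomp Require Import all_boot all_order all_algebra.
Set Implicit Arguments. Unset Strict Implicit. Unset Printing Implicit Defensive.
Import Order.TTheory GRing.Theory Num.Theory.

Section Defs.
Variable V : finType.
Implicit Types (F : {set {set V}}) (A B : {set V}) (x : V).

Definition hereditary F : Prop :=
  forall A B, B \in F -> A \subset B -> A \in F.

Definition link F x : {set {set V}} := [set A :\ x | A in [set B in F | x \in B]].

Definition deg F x : nat := #|link F x|.

Definition degS F A : nat := #|[set B in F | A \subset B]|.

(* delta(F) >= k  (V nonempty in all uses: delta = min over x in V) *)
Definition delta_ge F (k : nat) : Prop := forall x, k <= deg F x.
Definition delta_le F (k : nat) : Prop := exists x, deg F x <= k.

Definition maximal F B : Prop :=
  B \in F /\ forall C, C \in F -> B \subset C -> C = B.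

Definition minimal_family F : Prop :=
  [/\ hereditary F, delta_ge F 12 &
      forall B, maximal F B -> delta_le (F :\ B) 11].

Definition fdeg F x (i : nat) : nat := #|[set A in link F x | #|A| == i]|.

Definition mini_weight F x : Prop :=
  [/\ fdeg F x 1 = 4, fdeg F x 2 = 5 & fdeg F x 3 = 2].

Definition Qx F x : {set {set V}} := [set Q in F | (#|Q| == 4) && (x \in Q)].

Definition nbig F B : nat :=
  #|[set e : {set V} | (e \subset B) && (#|e| == 2) && (4 < degS F e)]|.

(* For |B| = 3 not contained in a 4-element
   member: with e1,e2,e3 the 2-subsets ordered by d_F,
   "d(e2) <= 4 < d(e3)"  <=> exactly one 2-subset has d > 4 (it is e3);
   "d(e1) <= 4 < d(e2)"  <=> exactly two 2-subsets have d > 4 (e1 is the other).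
   The 2-subset of B not containing x is B :\ x. *)
Definition omega F x B : rat :=
  (if #|B| != 3 then (#|B|%:R)^-1
  else if [exists Q in F, (#|Q| == 4) && (B \subset Q)] then 3%:R^-1
  else if nbig F B == 1 then
    (* x in e3 iff B :\ x is not e3 iff d(B :\ x) <= 4 *)
    (if (degS F (B :\ x) <= 4)%N then 7%:R / 20%:R else 6%:R / 20%:R)
  else if nbig F B == 2 then
    (* x in e1 iff B :\ x is not e1 iff d(B :\ x) > 4 *)
    (if (4 < degS F (B :\ x))%N then 7%:R / 20%:R else 6%:R / 20%:R)
  else 3%:R^-1)%R.

Definition weight F x : rat := (\sum_(B in F | x \in B) omega F x B)%R.

End Defs.

(* Main.v *)
Require Import Defs.
From mathcomp Require Import all_boot all_order all_algebra.
Import GRing.Theory Num.Theory.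
Local Open Scope ring_scope.

Section Aux.
Variables (V : finType) (F : {set {set V}}) (x : V).
Hypothesis hered : hereditary F.
Hypothesis f1 : fdeg F x 1 = 4%N.
Hypothesis f2 : fdeg F x 2 = 5%N.
Hypothesis f3 : fdeg F x 3 = 2%N.

Local Notation L := (link F x).

Lemma memL (A : {set V}) : (A \in L) = (x \notin A) && (x |: A \in F).
Proof.
apply/imsetP/andP.
  case=> B; rewrite inE => /andP[BF xB] ->.
  by rewrite setD11 setD1K.
case=> xA AF; exists (x |: A); first by rewrite inE AF setU11.
by rewrite setU1K.
Qed.

Lemma heredL {A C : {set V}} : A \in L -> C \subset A -> C \in L.
Proof.
rewrite !memL => /andP[xA AF] CA; apply/andP; split.
  by apply: contra xA; apply: (subsetP CA).
by apply: (hered _ _ AF); apply: setUS.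
Qed.

Definition N := [set y | [set y] \in L].

Lemma subN {A : {set V}} : A \in L -> A \subset N.
Proof.
move=> AL; apply/subsetP => y yA; rewrite inE.
by apply: heredL AL _; rewrite sub1set.
Qed.

Lemma cardN : #|N| = 4%N.
Proof.
rewrite -f1 /fdeg -(card_imset _ (@set1_inj V)).
apply: eq_card => A; rewrite inE.
apply/imsetP/andP.
  by case=> y; rewrite inE => yL ->; rewrite cards1.
case=> AL /cards1P[y Ay]; exists y => //; by rewrite inE -Ay.
Qed.

Lemma exists_cd : exists c d, [/\ c != d, c \in N, d \in N & [set c; d] \notin L].
Proof.
have : ~~ ([set A : {set V} | A \subset N & #|A| == 2%N] \subset [set A in L | #|A| == 2%N]).
  apply/negP => /subset_leq_card; rewrite cards_draws cardN.
  by move: f2; rewrite /fdeg => ->.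
case/subsetPn => A; rewrite !inE => /andP[AN A2].
rewrite A2 andbT => AL.
case/cards2P: A2 => c [d [cd Acd]]; exists c, d; subst A.
split => //.
- by apply: (subsetP AN); rewrite !inE eqxx.
- by apply: (subsetP AN); rewrite !inE eqxx orbT.
Qed.

Variables c d : V.
Hypotheses (cd : c != d) (cN : c \in N) (dN : d \in N) (cdL : [set c; d] \notin L).

Local Notation P := (N :\ c).
Local Notation R := (N :\ d).

Lemma cardP : #|P| = 3%N.
Proof. by move: cardN; rewrite (cardsD1 c) cN => -[]. Qed.
Lemma cardR : #|R| = 3%N.
Proof. by move: cardN; rewrite (cardsD1 d) dN => -[]. Qed.

Lemma notcd {A : {set V}} : A \in L -> (c \notin A) || (d \notin A).
Proof.
move=> AL; rewrite -negb_and; apply/negP => /andP[cA dA].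
move/negP: cdL; apply; apply: (heredL AL).
by apply/subsetP => y; rewrite !inE => /orP[] /eqP ->.
Qed.

Lemma subPR {A : {set V}} : A \in L -> (A \subset P) || (A \subset R).
Proof.
move=> AL; rewrite !subsetD1 subN //=.
exact: notcd.
Qed.

Lemma T3 : [set A in L | #|A| == 3%N] = [set P; R].
Proof.
apply/eqP; rewrite eqEcard; apply/andP; split.
  apply/subsetP => A; rewrite !inE => /andP[AL /eqP A3].
  case/orP: (subPR AL) => sub.
    by apply/orP; left; rewrite eqEcard sub cardP A3.
  by apply/orP; right; rewrite eqEcard sub cardR A3.
by move: f3; rewrite /fdeg => ->; rewrite cards2; case: (_ != _).
Qed.

Lemma PL : P \in L.
Proof. by have := set21 P R; rewrite -T3 inE => /andP[]. Qed.
Lemma RL : R \in L.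
Proof. by have := set22 P R; rewrite -T3 inE => /andP[]. Qed.

Lemma Lchar A : (A \in L) = (A \subset P) || (A \subset R).
Proof.
apply/idP/idP; first exact: subPR.
by case/orP => sub; [apply: heredL PL sub | apply: heredL RL sub].
Qed.

Lemma PneR : P != R.
Proof.
apply/eqP => PR; have : c \in R by rewrite in_setD1 cN andbT; exact: cd.
by rewrite -PR in_setD1 eqxx.
Qed.

Lemma xP : x \notin P.
Proof. by have := PL; rewrite memL => /andP[]. Qed.
Lemma xR : x \notin R.
Proof. by have := RL; rewrite memL => /andP[]. Qed.

Lemma QxE : Qx F x = [set x |: P; x |: R].
Proof.
apply/setP => Q; rewrite !inE; apply/idP/idP.
  case/andP=> QF /andP[/eqP Q4 xQ].
  have : Q :\ x \in [set A in L | #|A| == 3%N].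
    rewrite inE memL setD11 setD1K // QF /=.
    by move: Q4; rewrite (cardsD1 x Q) xQ add1n => -[->].
  by rewrite T3 !inE => /orP[] /eqP <-; rewrite setD1K // eqxx ?orbT.
have PF : x |: P \in F by have := PL; rewrite memL => /andP[].
have RF : x |: R \in F by have := RL; rewrite memL => /andP[].
case/orP => /eqP ->; rewrite ?PF ?RF setU11 cardsU1 ?xP ?xR ?cardP ?cardR //.
Qed.

Lemma xPneR : x |: P != x |: R.
Proof.
apply: contra PneR => /eqP e.
by rewrite -(setU1K xP) e setU1K // xR.
Qed.

Lemma cardPR : #|P :&: R| = 2%N.
Proof.
have : P :|: R = N.
  apply/setP => y; rewrite in_setU !in_setD1; case: (y \in N); rewrite ?andbF ?andbT //.
  by case: (y =P c) => // ->; exact: cd.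
move=> PRN; move: (cardsUI P R).
by rewrite PRN cardP cardR cardN => h; apply/eqP; rewrite -(eqn_add2l 4) h.
Qed.


Lemma PF : x |: P \in F.
Proof. by have := PL; rewrite memL => /andP[]. Qed.
Lemma RF : x |: R \in F.
Proof. by have := RL; rewrite memL => /andP[]. Qed.

Lemma omegaL A : A \in L -> omega F x (x |: A) = ((#|A|).+1%:R)^-1.
Proof.
move=> AL; have xA : x \notin A by move: AL; rewrite memL => /andP[].
rewrite /omega cardsU1 xA add1n.
have [e|ne] := eqVneq (#|A|.+1) 3; last by [].
rewrite /= e.
suff -> : [exists Q in F, (#|Q| == 4) && (x |: A \subset Q)] by [].
apply/existsP; case/orP: (subPR AL) => sub.
  exists (x |: P); rewrite PF cardsU1 xP cardP /=; exact: setUS.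
exists (x |: R); rewrite RF cardsU1 xR cardR /=; exact: setUS.
Qed.

Lemma weightE : weight F x = \sum_(A in L) ((#|A|).+1%:R)^-1.
Proof.
rewrite /weight /link big_imset /=.
  apply: eq_big => [B|B]; first by rewrite inE.
  move=> /andP[BF xB]; rewrite -omegaL ?setD1K //.
  by rewrite memL setD11 setD1K.
move=> B1 B2; rewrite !inE => /andP[_ x1] /andP[_ x2] e.
by rewrite -(setD1K x1) e setD1K.
Qed.

Lemma cardL A : A \in L -> (#|A| < 4)%N.
Proof.
move/subPR => /orP[] /subset_leq_card; rewrite ?cardP ?cardR //.
Qed.

Lemma term (k : 'I_4) :
  \sum_(A | (A \in L) && (inord #|A| == k)) ((#|A|).+1%:R)^-1 =
  ((k : nat).+1%:R : rat)^-1 *+ fdeg F x k.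
Proof.
rewrite /fdeg -sumr_const; apply: eq_big => A.
  rewrite inE; case AL: (A \in L) => //=.
  by rewrite -val_eqE /= inordK // cardL.
move=> /andP[AL /eqP e]; rewrite -e inordK // cardL //.
Qed.

Lemma f0 : fdeg F x 0 = 1%N.
Proof.
rewrite /fdeg -(cards1 (@set0 V)); apply: eq_card => A.
rewrite !inE cards_eq0; case: (A =P set0) => [->|]; rewrite ?andbF ?andbT //.
exact: (heredL PL (sub0set _)).
Qed.

Lemma weight_val : weight F x = 53%:R / 10%:R - 2%:R / 15%:R.
Proof.
rewrite weightE (partition_big (fun A : {set V} => inord #|A| : 'I_4) predT) //=.
rewrite !big_ord_recl big_ord0 addr0 !term /=.
rewrite f0 f1 f2 f3 /bump /=.
by apply/eqP; vm_compute.
Qed.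


Lemma cardI3 : #|(x |: P) :&: (x |: R)| = 3%N.
Proof. by rewrite -setUIr cardsU1 in_setI (negbTE xP) cardPR. Qed.

Lemma linkE : link F x = [set A :\ x | A in [set B : {set V} |
                       (x \in B) && ((B \subset x |: P) || (B \subset x |: R))]].
Proof.
apply/setP => A; apply/idP/imsetP.
  move=> AL; have xA : x \notin A by move: AL; rewrite memL => /andP[].
  exists (x |: A); last by rewrite setU1K.
  rewrite inE setU11 /=; case/orP: (subPR AL) => s; apply/orP; [left|right];
    exact: setUS.
case=> B; rewrite inE => /andP[xB sub] ->; rewrite Lchar.
case/orP: sub => s; apply/orP; [left|right].
  by rewrite -(setU1K xP); exact: setSD s.
by rewrite -(setU1K xR); exact: setSD s.
Qed.

End Aux.

Theorem mainTheorem6 (V : finType) (F : {set {set V}}) (x : V) :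
  minimal_family F -> mini_weight F x ->
  [/\ #|Qx F x| = 2%N,
      (forall Q1 Q2 : {set V}, Q1 != Q2 -> Qx F x = [set Q1; Q2] ->
         #|Q1 :&: Q2| = 3%N /\
         link F x = [set A :\ x | A in [set B : {set V} |
                       (x \in B) && ((B \subset Q1) || (B \subset Q2))]])
    & weight F x = 53%:R / 10%:R - 2%:R / 15%:R].
Proof.
case=> hered _ _ [f1 f2 f3].
have [c [d [cd cN dN cdL]]] := exists_cd _ _ _ f1 f2.
have QE : Qx F x = [set x |: N V F x :\ c; x |: N V F x :\ d] by apply: QxE.
split.
- rewrite QE cards2; suff -> : x |: N V F x :\ c != x |: N V F x :\ d by [].
  by apply: xPneR.
- move=> Q1 Q2 Q12; rewrite QE => e.
  have Q1in : Q1 \in [set x |: (N V F x :\ c); x |: (N V F x :\ d)] by rewrite e set21.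
  have Q2in : Q2 \in [set x |: (N V F x :\ c); x |: (N V F x :\ d)] by rewrite e set22.
  have LE : link F x = [set A :\ x | A in [set B : {set V} |
                       (x \in B) && ((B \subset x |: N V F x :\ c) || (B \subset x |: N V F x :\ d))]].
    by apply: linkE.
  have CI : #|(x |: N V F x :\ c) :&: (x |: N V F x :\ d)| = 3%N by apply: cardI3.
  move: Q1in Q2in; rewrite !inE => /orP[] /eqP E1 /orP[] /eqP E2;
    rewrite -?E1 -?E2 in CI LE *; rewrite E1 E2 ?eqxx // in Q12.
  split; first by rewrite setIC.
  rewrite LE; apply/setP => A; apply/imsetP/imsetP => -[B];
    rewrite !inE => HB ->; exists B => //; by rewrite !inE orbC.
- exact: (weight_val _ _ _ hered f1 f2 f3 _ _ cN dN cdL).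
Qed.
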